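(* Let $a,\alpha\in\mathbb R$, $\Delta t>0$, $h_x,h_y>0$ and $N_x,N_y\ge1$. Grid functions are arrays $(f_{ij})_{1\le i\le N_x,1\le j\le N_y}$ (values at cell centers $((i-\tfrac12)h_x,(j-\tfrac12)h_y)$), with discrete inner product $\langle f,g\rangle=h_xh_y\sum_{i,j}f_{ij}g_{ij}$. Let $\nabla_h^2=\Delta_h$ be the cell-centered discrete Laplacian with homogeneous Neumann boundary conditions, $$(\Delta_h\phi)_{ij}=\frac{\phi_{i+1,j}-2\phi_{ij}+\phi_{i-1,j}}{h_x^2}+\frac{\phi_{i,j+1}-2\phi_{ij}+\phi_{i,j-1}}{h_y^2},$$ with ghost values $\phi_{0,j}=\phi_{1,j}$, $\phi_{N_x+1,j}=\phi_{N_x,j}$, $\phi_{i,0}=\phi_{i,1}$, $\phi_{i,N_y+1}=\phi_{i,N_y}$, and let $\nabla_h^4=\Delta_h\Delta_h$. Let $n\ge1$ and let grid functions $\phi^{n-1},\phi^n,q^{n-1},q^n$ and a grid function $\bar M^{n+1/2}$ with $\langle\bar M^{n+1/2},1\rangle\ne0$ be given; set $\bar{q'}^{\,n+1/2}=\tfrac32(2\phi^n)-\tfrac12(2\phi^{n-1})$ (pointwise). Suppose grid functions $\phi^{n+1},q^{n+1}$ satisfy $$\phi^{n+1}-\phi^n=-\Delta t\,\bar M^{n+1/2}\big(\mu^{n+1/2}-L^{n+1/2}\big),\qquad q^{n+1}-q^n=\bar{q'}^{\,n+1/2}(\phi^{n+1}-\phi^n),$$ (products of grid functions taken pointwise), where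 $(\bullet)^{n+1/2}=\tfrac12[(\bullet)^{n+1}+(\bullet)^n]$, $$\mu^{n+1/2}=(\nabla_h^4\phi+2a\nabla_h^2\phi+\alpha\phi)^{n+1/2}+\tfrac12q^{n+1/2}\bar{q'}^{\,n+1/2},\qquad L^{n+1/2}=\frac{\langle\bar M^{n+1/2},\mu^{n+1/2}\rangle}{\langle\bar M^{n+1/2},1\rangle}.$$ Define the discrete energy $F^k=\big\langle\tfrac{\phi^k}{2}(\nabla_h^4+2a\nabla_h^2+\alpha)\phi^k+\tfrac{(q^k)^2}{4},1\big\rangle$. Then $$F^{n+1}-F^n=-\Delta t\,\big\langle\mu^{n+1/2}-L^{n+1/2},\,\bar M^{n+1/2}(\mu^{n+1/2}-L^{n+1/2})\big\rangle.$$
   Context: This is the fully discrete (finite-difference in space, linear Crank–Nicolson/extrapolation in time, energy quadratization $q=\phi^2$, $q'=2\phi$) scheme for the Allen–Cahn equation with a Lagrange multiplier enforcing mass conservation, for the phase-field crystal free energy $\int[\tfrac12|\nabla^2\phi|^2-a|\nabla\phi|^2+\tfrac\alpha2\phi^2+\tfrac14\phi^4]$. $\bar M^{n+1/2}$ represents the extrapolated mobility $\tfrac32M^n-\tfrac12M^{n-1}$. *)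

(* Defs.v *)
(* Grid functions on an Nx x Ny cell-centered grid are
   matrices 'M[R]_(Nx, Ny); entry (i, j) (0-based) is the value at cell
   ((i+1/2) hx, (j+1/2) hy). *)
From HB Require Import structures.
From mathcomp Require Import all_boot all_order all_algebra.
Set Implicit Arguments. Unset Strict Implicit. Unset Printing Implicit Defensive.
Import Order.TTheory GRing.Theory Num.Theory.
Local Open Scope ring_scope.

Section Grid.
Variable R : realFieldType.
Variables Nx Ny : nat.
Notation grid := 'M[R]_(Nx, Ny).

(* neighbour index with homogeneous Neumann ghost values:
   next of the last index is itself, prev of the first index is itself *)
Definition nextI (N : nat) (i : 'I_N) : 'I_N := insubd i i.+1.
Definition prevI (N : nat) (i : 'I_N) : 'I_N := insubd i i.-1.

Definition gip (hx hy : R) (f g : grid) : R :=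
  hx * hy * \sum_(i < Nx) \sum_(j < Ny) f i j * g i j.

Definition gmul (f g : grid) : grid := \matrix_(i, j) (f i j * g i j).

Definition gconst (c : R) : grid := const_mx c.

Definition lap_h (hx hy : R) (f : grid) : grid :=
  \matrix_(i, j)
    ((f (nextI i) j - 2 * f i j + f (prevI i) j) / hx ^+ 2
   + (f i (nextI j) - 2 * f i j + f i (prevI j)) / hy ^+ 2).

Definition bilap_h (hx hy : R) (f : grid) : grid := lap_h hx hy (lap_h hx hy f).

Definition pfc_op (a alpha hx hy : R) (f : grid) : grid :=
  bilap_h hx hy f + (2 * a) *: lap_h hx hy f + alpha *: f.

Definition energy (a alpha hx hy : R) (phi q : grid) : R :=
  gip hx hy (\matrix_(i, j) (phi i j / 2 * pfc_op a alpha hx hy phi i j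
                            + (q i j) ^+ 2 / 4)) (gconst 1).

End Grid.

(* Main.v *)
Require Import Defs.
From HB Require Import structures.
From mathcomp Require Import all_boot all_order all_algebra.
From mathcomp Require Import ring lra.
Import Order.TTheory GRing.Theory Num.Theory.
Local Open Scope ring_scope.
Set Implicit Arguments. Unset Strict Implicit. Unset Printing Implicit Defensive.

Lemma next_widen n (i : 'I_n) : nextI (widen_ord (leqnSn n) i) = lift ord0 i.
Proof. apply: val_inj; rewrite /nextI val_insubd /= ltnS ltn_ord. by rewrite /bump leq0n. Qed.
Lemma next_max n : nextI (@ord_max n) = ord_max.
Proof. apply: val_inj; by rewrite /nextI val_insubd /= ltnn. Qed.
Lemma prev_lift n (i : 'I_n) : prevI (lift ord0 i) = widen_ord (leqnSn n) i.
Proof. apply: val_inj; rewrite /prevI val_insubd /= /bump leq0n /= add1n /=.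
  by rewrite add0n ltnS ltnW. Qed.
Lemma prev_0 n : prevI (@ord0 n) = ord0.
Proof. apply: val_inj; by rewrite /prevI val_insubd /=. Qed.

Lemma sym1 (R : realFieldType) N (F G : 'I_N -> R) :
  \sum_i F i * (G (nextI i) - 2 * G i + G (prevI i)) =
  \sum_i (F (nextI i) - 2 * F i + F (prevI i)) * G i.
Proof.
have E : forall F G : 'I_N -> R, \sum_i F i * (G (nextI i) - 2 * G i + G (prevI i)) =
   \sum_i F i * G (nextI i) + \sum_i F i * G (prevI i) - 2 * \sum_i F i * G i.
  move=> F1 G1; rewrite -big_split mulr_sumr -sumrB; apply: eq_bigr => i _ /=; ring.
have E2 : \sum_i (F (nextI i) - 2 * F i + F (prevI i)) * G i =
   \sum_i G i * (F (nextI i) - 2 * F i + F (prevI i)).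
  by apply: eq_bigr => i _; rewrite mulrC.
rewrite E2 !E.
have -> : \sum_i G i * F i = \sum_i F i * G i by apply: eq_bigr => i _; rewrite mulrC.
congr (_ - _).
case: N F G {E E2} => [|n] F G; first by rewrite !big_ord0.
have Hn : forall F G : 'I_n.+1 -> R, \sum_i F i * G (nextI i) =
   \sum_(i < n) F (widen_ord (leqnSn n) i) * G (lift ord0 i) + F ord_max * G ord_max.
  move=> F1 G1; rewrite big_ord_recr /= next_max; congr (_ + _).
  by apply: eq_bigr => i _; rewrite next_widen.
have Hp : forall F G : 'I_n.+1 -> R, \sum_i F i * G (prevI i) =
   F ord0 * G ord0 + \sum_(i < n) F (lift ord0 i) * G (widen_ord (leqnSn n) i).
  move=> F1 G1; rewrite big_ord_recl /= prev_0; congr (_ + _).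
  by apply: eq_bigr => i _; rewrite prev_lift.
rewrite !Hn !Hp.
have -> : \sum_(i < n) G (widen_ord (leqnSn n) i) * F (lift ord0 i) = \sum_(i < n) F (lift ord0 i) * G (widen_ord (leqnSn n) i) by apply: eq_bigr => i _; rewrite mulrC.
have -> : \sum_(i < n) G (lift ord0 i) * F (widen_ord (leqnSn n) i) = \sum_(i < n) F (widen_ord (leqnSn n) i) * G (lift ord0 i) by apply: eq_bigr => i _; rewrite mulrC.
rewrite (mulrC (G ord0)) (mulrC (G ord_max)). ring.
Qed.

Lemma symc (R : realFieldType) N (F G : 'I_N -> R) (c : R) :
  \sum_i F i * ((G (nextI i) - 2 * G i + G (prevI i)) / c) =
  \sum_i ((F (nextI i) - 2 * F i + F (prevI i)) / c) * G i.
Proof.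
have -> : \sum_i F i * ((G (nextI i) - 2 * G i + G (prevI i)) / c) =
  (\sum_i F i * (G (nextI i) - 2 * G i + G (prevI i))) / c.
  by rewrite mulr_suml; apply: eq_bigr => i _; rewrite mulrA.
have -> : \sum_i ((F (nextI i) - 2 * F i + F (prevI i)) / c) * G i =
  (\sum_i (F (nextI i) - 2 * F i + F (prevI i)) * G i) / c.
  by rewrite mulr_suml; apply: eq_bigr => i _; rewrite mulrAC.
by rewrite sym1.
Qed.

Section S.
Variable R : realFieldType.
Variables Nx Ny : nat.
Definition S (f g : 'M[R]_(Nx, Ny)) := \sum_i \sum_j f i j * g i j.

Lemma S_sym f g : S f g = S g f.
Proof. by apply: eq_bigr => i _; apply: eq_bigr => j _; rewrite mulrC. Qed.
Lemma S_addr f g h : S f (g + h) = S f g + S f h.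
Proof. rewrite /S -big_split; apply: eq_bigr => i _; rewrite -big_split; apply: eq_bigr => j _; by rewrite mxE mulrDr. Qed.
Lemma S_subr f g h : S f (g - h) = S f g - S f h.
Proof. rewrite /S -sumrB; apply: eq_bigr => i _; rewrite -sumrB; apply: eq_bigr => j _; by rewrite !mxE mulrBr. Qed.
Lemma S_scaler f c g : S f (c *: g) = c * S f g.
Proof. rewrite /S mulr_sumr; apply: eq_bigr => i _; rewrite mulr_sumr; apply: eq_bigr => j _; by rewrite !mxE mulrCA. Qed.
Lemma S_addl f g h : S (g + h) f = S g f + S h f.
Proof. by rewrite S_sym S_addr !(S_sym f). Qed.
Lemma S_subl f g h : S (g - h) f = S g f - S h f.
Proof. by rewrite S_sym S_subr !(S_sym f). Qed.
Lemma S_scalel f c g : S (c *: g) f = c * S g f.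
Proof. by rewrite S_sym S_scaler !(S_sym f). Qed.
Lemma S_gmul a b c : S (gmul a b) c = S b (gmul a c).
Proof. apply: eq_bigr => i _; apply: eq_bigr => j _; rewrite !mxE; ring. Qed.
Lemma S_gconst a b c : S (gmul a b) (gconst Nx Ny c) = c * S a b.
Proof. rewrite /S mulr_sumr; apply: eq_bigr => i _; rewrite mulr_sumr; apply: eq_bigr => j _; rewrite !mxE; ring. Qed.
Lemma S_gconst1 a c : S a (gconst Nx Ny c) = c * S a (gconst Nx Ny 1).
Proof. rewrite /S mulr_sumr; apply: eq_bigr => i _; rewrite mulr_sumr; apply: eq_bigr => j _; rewrite !mxE; ring. Qed.

Lemma S_lap hx hy f g : S f (lap_h hx hy g) = S (lap_h hx hy f) g.
Proof.
rewrite /S.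
have -> : \sum_i \sum_j f i j * lap_h hx hy g i j =
  \sum_i \sum_j f i j * ((g (nextI i) j - 2 * g i j + g (prevI i) j) / hx ^+ 2)
  + \sum_i \sum_j f i j * ((g i (nextI j) - 2 * g i j + g i (prevI j)) / hy ^+ 2).
  rewrite -big_split; apply: eq_bigr => i _; rewrite -big_split; apply: eq_bigr => j _.
  by rewrite mxE mulrDr.
have -> : \sum_i \sum_j lap_h hx hy f i j * g i j =
  \sum_i \sum_j ((f (nextI i) j - 2 * f i j + f (prevI i) j) / hx ^+ 2) * g i j
  + \sum_i \sum_j ((f i (nextI j) - 2 * f i j + f i (prevI j)) / hy ^+ 2) * g i j.
  rewrite -big_split; apply: eq_bigr => i _; rewrite -big_split; apply: eq_bigr => j _.
  by rewrite mxE mulrDl.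
congr (_ + _).
  rewrite exchange_big [RHS]exchange_big; apply: eq_bigr => j _.
  by have := symc (fun i => f i j) (fun i => g i j) (hx ^+ 2).
apply: eq_bigr => i _; exact: (symc (f i) (g i)).
Qed.

Lemma S_A a alpha hx hy f g :
  S f (pfc_op a alpha hx hy g) = S g (pfc_op a alpha hx hy f).
Proof.
rewrite /pfc_op /bilap_h !S_addr !S_scaler !S_lap (S_sym (lap_h _ _ _)) S_lap.
have E1 : S (lap_h hx hy (lap_h hx hy g)) f = S (lap_h hx hy g) (lap_h hx hy f) by rewrite S_sym S_lap S_sym.
have E2 : S (lap_h hx hy f) g = S (lap_h hx hy g) f by rewrite -S_lap S_sym.
by rewrite E1 E2 (S_sym f g).
Qed.
End S.

Lemma lapD (R : realFieldType) Nx Ny (hx hy : R) (f g : 'M[R]_(Nx, Ny)) :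
  lap_h hx hy (f + g) = lap_h hx hy f + lap_h hx hy g.
Proof. apply/matrixP => i j; rewrite /lap_h !mxE; ring. Qed.
Lemma lapZ (R : realFieldType) Nx Ny (hx hy c : R) (f : 'M[R]_(Nx, Ny)) :
  lap_h hx hy (c *: f) = c *: lap_h hx hy f.
Proof. apply/matrixP => i j; rewrite /lap_h !mxE; ring. Qed.
Lemma pfcD (R : realFieldType) Nx Ny (a alpha hx hy : R) (f g : 'M[R]_(Nx, Ny)) :
  pfc_op a alpha hx hy (f + g) = pfc_op a alpha hx hy f + pfc_op a alpha hx hy g.
Proof.
rewrite /pfc_op /bilap_h !lapD.
move: (lap_h hx hy (lap_h hx hy f)) (lap_h hx hy (lap_h hx hy g)) (lap_h hx hy f) (lap_h hx hy g) => X1 X2 Y1 Y2.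
apply/matrixP => i j; rewrite !mxE; ring.
Qed.
Lemma pfcZ (R : realFieldType) Nx Ny (a alpha hx hy c : R) (f : 'M[R]_(Nx, Ny)) :
  pfc_op a alpha hx hy (c *: f) = c *: pfc_op a alpha hx hy f.
Proof.
rewrite /pfc_op /bilap_h !lapZ.
move: (lap_h hx hy (lap_h hx hy f)) (lap_h hx hy f) => X Y.
apply/matrixP => i j; rewrite !mxE; ring.
Qed.

Lemma energyE (R : realFieldType) Nx Ny (a alpha hx hy : R) (p q : 'M[R]_(Nx, Ny)) :
  energy a alpha hx hy p q = hx * hy * (S p (pfc_op a alpha hx hy p) / 2 + S q q / 4).
Proof.
rewrite /energy /gip /S; congr (_ * _).
rewrite !mulr_suml -big_split; apply: eq_bigr => i _.
rewrite !mulr_suml -big_split; apply: eq_bigr => j _ /=.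
rewrite !mxE; ring.
Qed.

Theorem theorem4p3 (R : realFieldType) (Nx Ny : nat)
  (hNx : (1 <= Nx)%N) (hNy : (1 <= Ny)%N)
  (a alpha dt hx hy : R) (hdt : 0 < dt) (hhx : 0 < hx) (hhy : 0 < hy)
  (phi_prev phi_n q_prev q_n Mbar phi_next q_next : 'M[R]_(Nx, Ny)) :
  gip hx hy Mbar (gconst Nx Ny 1) != 0 ->
  let qbar := (3 / 2) *: (2 *: phi_n) - (1 / 2) *: (2 *: phi_prev) in
  let phi_half := (1 / 2) *: (phi_next + phi_n) in
  let q_half := (1 / 2) *: (q_next + q_n) in
  let mu := pfc_op a alpha hx hy phi_half + (1 / 2) *: gmul q_half qbar in
  let L := gip hx hy Mbar mu / gip hx hy Mbar (gconst Nx Ny 1) in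
  let w := mu - gconst Nx Ny L in
  phi_next - phi_n = - (dt *: gmul Mbar w) ->
  q_next - q_n = gmul qbar (phi_next - phi_n) ->
  energy a alpha hx hy phi_next q_next - energy a alpha hx hy phi_n q_n
    = - (dt * gip hx hy w (gmul Mbar w)).
Proof.
move=> Hne qbar phi_half q_half mu L w H1 H2.
set p1 := phi_next; set p0 := phi_n; set q1 := q_next; set q0 := q_n.
set d := p1 - p0.
have gipS : forall f g, gip hx hy f g = hx * hy * S f g by [].
rewrite !energyE !gipS.
have St1 : S p1 (pfc_op a alpha hx hy p1) - S p0 (pfc_op a alpha hx hy p0) = S d (pfc_op a alpha hx hy p1 + pfc_op a alpha hx hy p0).
  move: (S_A a alpha hx hy p1 p0); rewrite /d.
  move: (pfc_op a alpha hx hy p1) (pfc_op a alpha hx hy p0) => B1 B0 K.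
  rewrite S_subl !S_addr K; ring.
have St2 : S q1 q1 - S q0 q0 = S d (gmul qbar (q1 + q0)).
  rewrite -S_gmul -H2 S_subl !S_addr (S_sym q1 q0); ring.
have Hmu : mu = (1/2) *: (pfc_op a alpha hx hy p1 + pfc_op a alpha hx hy p0) + (1/4) *: gmul qbar (q1 + q0).
  rewrite /mu /phi_half pfcZ pfcD; congr (_ + _).
  move: (phi_next) (phi_n) (q_next) (q_n) => P1 P0 Q1 Q0.
  apply/matrixP => i j; rewrite /q_half !mxE; by field.
have St3 : S d mu = - dt * (S w (gmul Mbar w)).
  have Hmw : mu = w + gconst Nx Ny L by rewrite /w subrK.
  have Hw0 : S Mbar w = 0.
    rewrite /w S_subr (S_gconst1 Mbar L) /L !gipS.
    move: Hne; rewrite gipS => Hne.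
    field; try done; apply/and3P; split; last 2 first.
    - exact: lt0r_neq0 hhy.
    - exact: lt0r_neq0 hhx.
    apply/eqP => E; move: Hne; by rewrite E mulr0 eqxx.
  rewrite /d H1 -scaleNr S_scalel Hmw S_addr S_gconst Hw0 (S_sym w) S_gmul.
  ring.
have Hd : S p1 (pfc_op a alpha hx hy p1) / 2 + S q1 q1 / 4 - (S p0 (pfc_op a alpha hx hy p0) / 2 + S q0 q0 / 4) = S d mu.
  rewrite Hmu (S_addr d) !(S_scaler d) -St1 -St2; ring.
rewrite -mulrBr Hd St3; ring.
Qed.
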